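(* Consider the saddle-point structured problem in the context under the stated assumptions. If $(\bar x,\bar y)$ is an $\varepsilon$-saddle point (for some $\varepsilon\ge0$), then $p(\bar x)-d(\bar y)\le2\varepsilon D_\phi+\frac{3\varepsilon^2}{2\mu}$.
   Context: Let $A\in\mathbb R^{m\times n}$, $f:\mathbb R^n\to\mathbb R$ convex, differentiable with $L_f$-Lipschitz gradient and $\mu$-strongly convex with $\mu>0$, and $r:\mathbb R^n\to\mathbb R\cup\{+\infty\}$, $\phi:\mathbb R^m\to\mathbb R\cup\{+\infty\}$ proper closed convex, with $\mathrm{dom}(\phi)$ bounded and $D_\phi=\max_{y_1,y_2\in\mathrm{dom}(\phi)}\|y_1-y_2\|$. Define $G=f+r$, $p(x)=G(x)+\max_y\{\langle y,Ax\rangle-\phi(y)\}$, $\varphi(y)=\min_x\{G(x)+\langle y,Ax\rangle\}$, $d(y)=\varphi(y)-\phi(y)$. Assume a saddle point $(x^*,y^* )$ exists, i.e. $0\in\partial G(x^* )+A^\top y^*$ and $0\in Ax^*-\partial\phi(y^* )$. A pair $(\bar x,\bar y)$ is an $\varepsilon$-saddle point if $\mathrm{dist}(0,\partial G(\bar x)+A^\top\bar y)\le\varepsilon$ and $\mathrm{dist}(0,A\bar x-\partial\phi(\bar y))\le\varepsilon$, where $\partial$ is the convex subdifferential and $\mathrm{dist}(0,S)=\inf_{s\in S}\|s\|$. *)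

(* Defs.v *)
From HB Require Import structures.
From mathcomp Require Import all_boot all_order all_algebra.
From mathcomp Require Import boolp classical_sets reals constructive_ereal ereal.
Set Implicit Arguments. Unset Strict Implicit. Unset Printing Implicit Defensive.
Import Order.TTheory GRing.Theory Num.Theory.
Local Open Scope classical_set_scope.
Local Open Scope ring_scope.

Section Defs.
Variable R : realType.

Definition dotv (k : nat) (u v : 'cV[R]_k) : R := \sum_(i < k) u i 0 * v i 0.
Definition normv (k : nat) (u : 'cV[R]_k) : R := Num.sqrt (dotv u u).

Definition edom (k : nat) (g : 'cV[R]_k -> \bar R) : set 'cV[R]_k :=
  [set x | g x \is a fin_num].

Definition proper_fun (k : nat) (g : 'cV[R]_k -> \bar R) : Prop :=
  (forall x, g x != -oo%E) /\ (exists x, g x \is a fin_num).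

(* closed = lower semicontinuous (Euclidean topology) *)
Definition closed_fun (k : nat) (g : 'cV[R]_k -> \bar R) : Prop :=
  forall x (a : R), (a%:E < g x)%E ->
    exists2 delta : R, 0 < delta &
      forall y, normv (y - x) < delta -> (a%:E < g y)%E.

Definition convex_efun (k : nat) (g : 'cV[R]_k -> \bar R) : Prop :=
  forall (x y : 'cV[R]_k) (t : R), 0 < t < 1 ->
    (g (t *: x + (1 - t) *: y)%R <= t%:E * g x + (1 - t)%:E * g y)%E.

Definition convex_rfun (k : nat) (f : 'cV[R]_k -> R) : Prop :=
  forall x y (t : R), 0 <= t <= 1 ->
    f (t *: x + (1 - t) *: y) <= t * f x + (1 - t) * f y.

Definition strongly_convex (k : nat) (mu : R) (f : 'cV[R]_k -> R) : Prop :=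
  forall x y (t : R), 0 <= t <= 1 ->
    f (t *: x + (1 - t) *: y) <=
      t * f x + (1 - t) * f y - mu / 2 * t * (1 - t) * normv (x - y) ^+ 2.

Definition has_gradient (k : nat) (f : 'cV[R]_k -> R) (x gx : 'cV[R]_k) : Prop :=
  forall eps : R, 0 < eps -> exists2 delta : R, 0 < delta &
    forall h, normv h < delta ->
      `|f (x + h) - f x - dotv gx h| <= eps * normv h.

Definition smooth_Lipschitz_grad (k : nat) (L : R) (f : 'cV[R]_k -> R) : Prop :=
  exists gradf : 'cV[R]_k -> 'cV[R]_k,
    (forall x, has_gradient f x (gradf x)) /\
    (forall x y, normv (gradf x - gradf y) <= L * normv (x - y)).

Definition subdiff (k : nat) (g : 'cV[R]_k -> \bar R) (x : 'cV[R]_k) : set 'cV[R]_k :=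
  [set s | g x \is a fin_num /\ forall z, (g x + (dotv s (z - x)%R)%:E <= g z)%E].

(* dist(0, S) = inf_{s in S} ||s||  (= +oo if S is empty) *)
Definition dist0 (k : nat) (S : set 'cV[R]_k) : \bar R :=
  ereal_inf [set (normv s)%:E | s in S].

Definition diam_dom (k : nat) (g : 'cV[R]_k -> \bar R) : \bar R :=
  ereal_sup [set (normv (y1 - y2))%:E | y1 in edom g & y2 in edom g].

Variables (m n : nat).

Definition Gfun (f : 'cV[R]_n -> R) (r : 'cV[R]_n -> \bar R) (x : 'cV[R]_n) : \bar R :=
  ((f x)%:E + r x)%E.

Definition primal_p (A : 'M[R]_(m, n)) (f : 'cV[R]_n -> R) (r : 'cV[R]_n -> \bar R)
  (phi : 'cV[R]_m -> \bar R) (x : 'cV[R]_n) : \bar R :=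
  (Gfun f r x + ereal_sup [set ((dotv y (A *m x))%:E - phi y)%E | y in [set: 'cV[R]_m]])%E.

Definition varphi (A : 'M[R]_(m, n)) (f : 'cV[R]_n -> R) (r : 'cV[R]_n -> \bar R)
  (y : 'cV[R]_m) : \bar R :=
  ereal_inf [set (Gfun f r x + (dotv y (A *m x))%:E)%E | x in [set: 'cV[R]_n]].

Definition dual_d (A : 'M[R]_(m, n)) (f : 'cV[R]_n -> R) (r : 'cV[R]_n -> \bar R)
  (phi : 'cV[R]_m -> \bar R) (y : 'cV[R]_m) : \bar R :=
  (varphi A f r y - phi y)%E.

Definition primal_res_set (A : 'M[R]_(m, n)) (f : 'cV[R]_n -> R) (r : 'cV[R]_n -> \bar R)
  (x : 'cV[R]_n) (y : 'cV[R]_m) : set 'cV[R]_n :=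
  [set s + A^T *m y | s in subdiff (Gfun f r) x].

Definition dual_res_set (A : 'M[R]_(m, n)) (phi : 'cV[R]_m -> \bar R)
  (x : 'cV[R]_n) (y : 'cV[R]_m) : set 'cV[R]_m :=
  [set A *m x - s | s in subdiff phi y].

Definition is_saddle_point (A : 'M[R]_(m, n)) (f : 'cV[R]_n -> R) (r : 'cV[R]_n -> \bar R)
  (phi : 'cV[R]_m -> \bar R) (x : 'cV[R]_n) (y : 'cV[R]_m) : Prop :=
  primal_res_set A f r x y 0 /\ dual_res_set A phi x y 0.

Definition is_eps_saddle_point (A : 'M[R]_(m, n)) (f : 'cV[R]_n -> R) (r : 'cV[R]_n -> \bar R)
  (phi : 'cV[R]_m -> \bar R) (eps : R) (x : 'cV[R]_n) (y : 'cV[R]_m) : Prop :=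
  (dist0 (primal_res_set A f r x y) <= eps%:E)%E /\
  (dist0 (dual_res_set A phi x y) <= eps%:E)%E.

End Defs.

(* Main.v *)
Require Import Defs.
From HB Require Import structures.
From mathcomp Require Import all_boot all_order all_algebra.
From mathcomp Require Import boolp classical_sets reals constructive_ereal ereal.
From mathcomp Require Import ring lra.
Import Order.TTheory GRing.Theory Num.Theory.
Local Open Scope classical_set_scope.
Local Open Scope ring_scope.
Set Implicit Arguments. Unset Strict Implicit.
Section Aux.
Variable R : realType.

Lemma dotvC k (u v : 'cV[R]_k) : dotv u v = dotv v u.
Proof. by rewrite /dotv; apply: eq_bigr => i _; rewrite mulrC. Qed.

Lemma dotvDr k (u v w : 'cV[R]_k) : dotv u (v + w) = dotv u v + dotv u w.
Proof. by rewrite /dotv -big_split; apply: eq_bigr => i _; rewrite mxE mulrDr. Qed.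

Lemma dotvZr k (u v : 'cV[R]_k) a : dotv u (a *: v) = a * dotv u v.
Proof. by rewrite /dotv mulr_sumr; apply: eq_bigr => i _; rewrite mxE mulrCA. Qed.

Lemma dotvNr k (u v : 'cV[R]_k) : dotv u (- v) = - dotv u v.
Proof. by rewrite -scaleN1r dotvZr mulN1r. Qed.

Lemma dotvBr k (u v w : 'cV[R]_k) : dotv u (v - w) = dotv u v - dotv u w.
Proof. by rewrite dotvDr dotvNr. Qed.

Lemma dotvDl k (u v w : 'cV[R]_k) : dotv (v + w) u = dotv v u + dotv w u.
Proof. by rewrite dotvC dotvDr !(dotvC u). Qed.

Lemma dotvBl k (u v w : 'cV[R]_k) : dotv (v - w) u = dotv v u - dotv w u.
Proof. by rewrite dotvC dotvBr !(dotvC u). Qed.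

Lemma dotvZl k (u v : 'cV[R]_k) a : dotv (a *: v) u = a * dotv v u.
Proof. by rewrite dotvC dotvZr dotvC. Qed.

Lemma dotvE k (u v : 'cV[R]_k) : dotv u v = (u^T *m v) 0 0.
Proof. by rewrite /dotv mxE; apply: eq_bigr => i _; rewrite mxE. Qed.

Lemma dotv_adj m n (A : 'M[R]_(m, n)) y x : dotv y (A *m x) = dotv (A^T *m y) x.
Proof. by rewrite !dotvE mulmxA trmx_mul trmxK. Qed.

Lemma dotv_ge0 k (u : 'cV[R]_k) : 0 <= dotv u u.
Proof. by rewrite /dotv; apply: sumr_ge0 => i _; rewrite -expr2 sqr_ge0. Qed.

Lemma normv_ge0 k (u : 'cV[R]_k) : 0 <= normv u.
Proof. exact: sqrtr_ge0. Qed.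

Lemma normv_sqr k (u : 'cV[R]_k) : normv u ^+ 2 = dotv u u.
Proof. by rewrite /normv sqr_sqrtr // dotv_ge0. Qed.

Lemma sq_le (x y : R) : 0 <= y -> x ^+ 2 <= y ^+ 2 -> x <= y.
Proof. move=> hy h; nra. Qed.

Lemma cs_sq k (u v : 'cV[R]_k) : dotv u v ^+ 2 <= dotv u u * dotv v v.
Proof.
have key t : 0 <= dotv u u + 2 * t * dotv u v + t ^+ 2 * dotv v v.
  have := dotv_ge0 (u + t *: v).
  rewrite !dotvDl !dotvDr !dotvZl !dotvZr (dotvC v u); lra.
have ha := dotv_ge0 u; have hc := dotv_ge0 v.
have [c0|cpos] := eqVneq (dotv v v) 0.
  rewrite c0 mulr0.
  have [b0|bn0] := eqVneq (dotv u v) 0; first by rewrite b0 expr2 mulr0.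
  have := key (- (dotv u u + 1) / (2 * dotv u v)).
  have -> : dotv u u + 2 * (- (dotv u u + 1) / (2 * dotv u v)) * dotv u v +
    (- (dotv u u + 1) / (2 * dotv u v)) ^+ 2 * dotv v v = -1.
    by rewrite c0; field.
  by rewrite ler0N1.
have cp : 0 < dotv v v by rewrite lt_def cpos hc.
have := key (- dotv u v / dotv v v).
have -> : dotv u u + 2 * (- dotv u v / dotv v v) * dotv u v +
   (- dotv u v / dotv v v) ^+ 2 * dotv v v =
   (dotv u u * dotv v v - dotv u v ^+ 2) / dotv v v by field.
by rewrite pmulr_lge0 ?invr_gt0 // subr_ge0.
Qed.

Lemma cauchy_schwarz k (u v : 'cV[R]_k) : `|dotv u v| <= normv u * normv v.
Proof.
apply: sq_le; first by rewrite mulr_ge0 ?normv_ge0.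
by rewrite exprMn !normv_sqr real_normK ?num_real // cs_sq.
Qed.

End Aux.

Section Aux2.
Variable R : realType.

Lemma G_sc n (f : 'cV[R]_n -> R) (r : 'cV[R]_n -> \bar R) mu xb s
  (hr : forall x, r x != -oo%E) (hsc : strongly_convex mu f) (hrc : convex_efun r)
  (hs : subdiff (Gfun f r) xb s) z :
  ((fine (Gfun f r xb) + dotv s (z - xb) + mu / 4 * normv (z - xb) ^+ 2)%:E
     <= Gfun f r z)%E.
Proof.
case: hs => hfin hs.
have := hfin; rewrite /Gfun fin_numD => /andP[_ /EFin_fin_numP[rx hrx]].
rewrite /Gfun in hs *; rewrite hrx /=.
case hz: (r z) => [rz| |]; last by move: (hr z); rewrite hz.
  2: by rewrite addey ?leey.
set w := 2^-1 *: z + (1 - 2^-1) *: xb.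
have hc := hrc z xb (2^-1); rewrite hz hrx -!EFinM -EFinD in hc.
have /hc {}hc : 0 < (2^-1 : R) < 1 by apply/andP; split; lra.
have hf := hsc z xb (2^-1).
have /hf {}hf : 0 <= (2^-1:R) <= 1 by apply/andP; split; lra.
have h1 := hs w; rewrite hrx -!EFinD in h1.
have h2 := le_trans h1 (leeD2l (f w)%:E hc).
rewrite -EFinD lee_fin in h2.
rewrite -EFinD lee_fin.
have e1 : dotv s (w - xb) = 2^-1 * dotv s z + (1 - 2^-1) * dotv s xb - dotv s xb.
  by rewrite dotvBr /w dotvDr !dotvZr.
rewrite e1 in h2; rewrite dotvBr.
lra.
Qed.
End Aux2.

Section Aux3.
Variable R : realType.

Lemma cs_bound k (u v : 'cV[R]_k) a b : normv u <= a -> normv v <= b ->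
  - (a * b) <= dotv u v <= a * b.
Proof.
move=> ha hb.
have h : `|dotv u v| <= a * b.
  have := cauchy_schwarz u v; have := normv_ge0 u; have := normv_ge0 v; nra.
by move/ler_normlP: h => [h1 h2]; rewrite h2 andbT -lerNl.
Qed.

Lemma quad_ge0 (mu e N : R) : 0 < mu -> 0 <= mu / 4 * N ^+ 2 - e * N + e ^+ 2 / mu.
Proof.
move=> hmu.
have -> : mu / 4 * N ^+ 2 - e * N + e ^+ 2 / mu = (mu * N / 2 - e) ^+ 2 / mu.
  by field; rewrite gt_eqF.
by rewrite divr_ge0 ?sqr_ge0 // ltW.
Qed.

Lemma core m n (A : 'M[R]_(m, n)) (f : 'cV[R]_n -> R) (r : 'cV[R]_n -> \bar R)
  (phi : 'cV[R]_m -> \bar R) mu (hmu : 0 < mu)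
  (hr : forall x, r x != -oo%E) (hsc : strongly_convex mu f) (hrc : convex_efun r)
  (hphi : forall y, phi y != -oo%E)
  xb yb (e b : R) sx sy
  (hsx : subdiff (Gfun f r) xb sx) (hnx : normv (sx + A^T *m yb) <= e)
  (hsy : subdiff phi yb sy) (hny : normv (A *m xb - sy) <= e)
  (hb : forall y, edom phi y -> normv (y - yb) <= b) :
  (primal_p A f r phi xb - dual_d A f r phi yb <= (e * b + e ^+ 2 / mu)%:E)%E.
Proof.
have hGx := hsx.1; set gx := fine (Gfun f r xb).
have eG : Gfun f r xb = gx%:E by rewrite fineK.
have := hsy.1 => /EFin_fin_numP[q hq].
set c := dotv yb (A *m xb).
have hsup : (ereal_sup [set ((dotv y (A *m xb))%:E - phi y)%E | y in [set: 'cV[R]_m]]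
   <= (c - q + e * b)%:E)%E.
  apply: ge_ereal_sup => _ [y _ <-].
  case hy: (phi y) => [qy| |]; last by move: (hphi y); rewrite hy.
    2: exact: leNye.
  have h1 := hsy.2 y; rewrite hq hy -EFinD lee_fin in h1.
  have h2 : normv (y - yb) <= b by apply: hb; rewrite /edom /= hy.
  have /andP[_ h3] := cs_bound h2 hny.
  rewrite -EFinB lee_fin.
  move: h3; rewrite dotvBl !dotvBr (dotvC sy y) (dotvC sy yb) in h1 *.
  rewrite /c; lra.
have hinf : ((gx + c - e ^+ 2 / mu)%:E <=
   ereal_inf [set (Gfun f r x + (dotv yb (A *m x))%:E)%E | x in [set: 'cV[R]_n]])%E.
  apply: le_ereal_inf_tmp => _ [z _ <-].
  have h1 := leeD (G_sc hr hsc hrc hsx z) (lexx (dotv yb (A *m z))%:E).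
  apply: le_trans h1; rewrite -EFinD lee_fin.
  have h2 := normv_ge0 (z - xb).
  have /andP[h3 _] := cs_bound hnx (lexx (normv (z - xb))).
  have h4 := quad_ge0 e (normv (z - xb)) hmu.
  move: h3; rewrite dotvDl !dotvBr /c !dotv_adj -/gx.
  lra.
rewrite /primal_p /dual_d /varphi eG hq.
apply: le_trans (leeB (leeD2l gx%:E hsup) (leeB hinf (lexx q%:E))) _.
have -> : (gx%:E + (c - q + e * b)%:E - ((gx + c - e ^+ 2 / mu)%:E - q%:E) =
  (gx + (c - q + e * b) - ((gx + c - e ^+ 2 / mu) - q))%:E)%E.
  by rewrite EFinB EFinD EFinB.
rewrite lee_fin; lra.
Qed.
End Aux3.

Lemma dist0_ex (R : realType) k (S : set 'cV[R]_k) (eps e' : R) :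
  (dist0 S <= eps%:E)%E -> eps < e' -> exists2 s, S s & normv s <= e'.
Proof.
move=> h he.
have : (dist0 S < e'%:E)%E by apply: le_lt_trans h _; rewrite lte_fin.
move=> /ereal_inf_lt[_ [s Ss <-]]; rewrite lte_fin => hs.
by exists s => //; apply: ltW.
Qed.

Lemma contra_small (R : realType) (x b im : R) : 0 <= b -> 0 < im ->
  (forall d, 0 < d -> x <= d * b + d ^+ 2 * im) -> x <= 0.
Proof.
move=> hb him h; rewrite leNgt; apply/negP => hx.
set d := x / (b + im + x).
have hC : 0 < b + im + x by lra.
have hd0 : 0 < d by rewrite divr_gt0.
have hd1 : d <= 1 by rewrite ler_pdivrMr // mul1r; lra.
have hdC : d * (b + im + x) = x by rewrite /d divfK // gt_eqF.
have h1 := h d hd0.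
have h2 : d ^+ 2 * im <= d * im.
  rewrite expr2 -mulrA ler_pM2l //; rewrite -[X in _ <= X]mul1r ler_pM2r //.
have h3 : 0 < d * x by rewrite mulr_gt0.
nra.
Qed.
Unset Implicit Arguments. Set Strict Implicit.
Theorem theorem6p3 (R : realType) (m n : nat) (A : 'M[R]_(m, n))
  (f : 'cV[R]_n -> R) (Lf mu : R)
  (r : 'cV[R]_n -> \bar R) (phi : 'cV[R]_m -> \bar R)
  (hf_conv : convex_rfun f)
  (hf_smooth : smooth_Lipschitz_grad Lf f)
  (hmu : 0 < mu) (hf_sc : strongly_convex mu f)
  (hr_prop : proper_fun r) (hr_closed : closed_fun r) (hr_conv : convex_efun r)
  (hphi_prop : proper_fun phi) (hphi_closed : closed_fun phi)
  (hphi_conv : convex_efun phi)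
  (hphi_bdd : exists M : R, forall y, edom phi y -> normv y <= M)
  (hsaddle : exists (xs : 'cV[R]_n) (ys : 'cV[R]_m), is_saddle_point A f r phi xs ys)
  (eps : R) (heps : 0 <= eps) (xb : 'cV[R]_n) (yb : 'cV[R]_m)
  (hxy : is_eps_saddle_point A f r phi eps xb yb) :
  (primal_p A f r phi xb - dual_d A f r phi yb
     <= (2 * eps)%:E * diam_dom phi + (3 * eps ^+ 2 / (2 * mu))%:E)%E.
Proof.
have hr := hr_prop.1; have hphi := hphi_prop.1.
case: hxy => hx hy.
have ext : forall e', eps < e' -> exists sx sy,
    [/\ subdiff (Gfun f r) xb sx, normv (sx + A^T *m yb) <= e',
        subdiff phi yb sy & normv (A *m xb - sy) <= e'].
  move=> e' he.
  have [_ [sx hsx <-] hnx] := dist0_ex hx he.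
  have [_ [sy hsy <-] hny] := dist0_ex hy he.
  by exists sx, sy.
have hyb : edom phi yb.
  have [sx [sy [_ _ hsy _]]] := ext (eps + 1) ltac:(lra).
  exact: hsy.1.
have [e0|epos] := eqVneq eps 0.
-
  case: hphi_bdd => M hM.
  have hM0 : 0 <= M by apply: le_trans (normv_ge0 yb) (hM _ hyb).
  have hb : forall y, edom phi y -> normv (y - yb) <= 2 * M.
    move=> y hy'; apply: sq_le; first lra.
    have h1 := hM _ hy'; have h2 := hM _ hyb.
    have /andP[h3 _] := cs_bound h1 h2.
    rewrite normv_sqr dotvBl !dotvBr (dotvC yb y) -!normv_sqr.
    have := normv_ge0 y; have := normv_ge0 yb; nra.
  rewrite e0 mulr0 mul0e expr2 mulr0 mulr0 mul0r add0e.
  set X := (primal_p A f r phi xb - dual_d A f r phi yb)%E.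
  have hX : forall d, 0 < d -> (X <= (d * (2 * M) + d ^+ 2 / mu)%:E)%E.
    move=> d hd.
    have [sx [sy [hsx hnx hsy hny]]] := ext d ltac:(lra).
    have := core hmu hr hf_sc hr_conv hphi hsx hnx hsy hny hb.
    exact.
  case hXe: X => [x| |].
  + rewrite lee_fin; apply: (@contra_small R x (2 * M) mu^-1) => //.
      lra.
      by rewrite invr_gt0.
    by move=> d hd; have := hX d hd; rewrite hXe lee_fin.
  + by have := hX 1 ltr01; rewrite hXe.
  + exact: leNye.
-
  have ep : 0 < eps by rewrite lt_def epos heps.
  set e' := eps + eps / 5.
  have [sx [sy [hsx hnx hsy hny]]] := ext e' ltac:(rewrite /e'; lra).
  have hD0 : (0%:E <= diam_dom phi)%E.
    apply: le_trans (ereal_sup_ubound _) ; last first.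
      by exists yb => //; exists yb.
    by rewrite lee_fin normv_ge0.
  case hD: (diam_dom phi) => [d| |]; last by rewrite hD in hD0.
  + have hb : forall y, edom phi y -> normv (y - yb) <= d.
      move=> y hy'; rewrite -lee_fin -hD; apply: ereal_sup_ubound.
      by exists y => //; exists yb.
    apply: le_trans (core hmu hr hf_sc hr_conv hphi hsx hnx hsy hny hb) _.
    rewrite -EFinM -EFinD lee_fin.
    rewrite hD lee_fin in hD0.
    have hk : 0 <= eps ^+ 2 / mu by rewrite divr_ge0 ?sqr_ge0 // ltW.
    have -> : e' ^+ 2 / mu = 36 / 25 * (eps ^+ 2 / mu) by rewrite /e'; field; rewrite gt_eqF.
    have -> : 3 * eps ^+ 2 / (2 * mu) = 3 / 2 * (eps ^+ 2 / mu) by field; rewrite gt_eqF.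
    rewrite /e'; nra.
  + rewrite gt0_muley ?lte_fin ?mulr_gt0 // addye //.
  exact: leey.
Qed.
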